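(* Let $\mathbf G$ be a torsion-free group, and let $x,y,z\in G$ be such that $x,y\in O_{\mathbf G}(z)$, $x\to y$ in $\vec{\mathcal G}^\pm(\mathbf G)$, and $y\notin\{x,x^{-1}\}$. Let $\mathbf H$ be a group and $\varphi:G\to H$ an isomorphism from $\mathcal G^\pm(\mathbf G)$ to $\mathcal G^\pm(\mathbf H)$. Then $\varphi(x)\to\varphi(y)$ in $\vec{\mathcal G}^\pm(\mathbf H)$ if and only if $\varphi(O_{\mathbf G}(z))=O_{\mathbf H}(\varphi(z))$.
   Context: For a group $\mathbf G$, the directed $Z^\pm$-power graph $\vec{\mathcal G}^\pm(\mathbf G)$ has vertex set $G$ and an arc $x\to y$ for distinct $x,y$ iff $y=x^n$ for some $n\in\mathbb Z\setminus\{0\}$; its underlying simple graph is the $Z^\pm$-power graph $\mathcal G^\pm(\mathbf G)$. For $z\in G$, $O_{\mathbf G}(z)=\{y\in G\setminus\{z^{-1}\}\mid z\to y\text{ in }\vec{\mathcal G}^\pm(\mathbf G)\}$. *)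

(* Defs.v *)
From Stdlib Require Import ZArith.
Set Implicit Arguments.

Record Group := {
  carrier :> Type;
  gmul : carrier -> carrier -> carrier;
  gone : carrier;
  ginv : carrier -> carrier;
  gmulA : forall a b c, gmul a (gmul b c) = gmul (gmul a b) c;
  gmul1 : forall a, gmul gone a = a;
  gmulV : forall a, gmul (ginv a) a = gone
}.

Fixpoint npow {G : Group} (x : G) (n : nat) : G :=
  match n with
  | O => gone G
  | S m => gmul G x (@npow G x m)
  end.

Definition zpow {G : Group} (x : G) (n : Z) : G :=
  match n with
  | Z0 => gone G
  | Zpos p => npow x (Pos.to_nat p)
  | Zneg p => ginv G (npow x (Pos.to_nat p))
  end.

Definition torsion_free (G : Group) : Prop :=
  forall (x : G) (n : nat), (0 < n)%nat -> npow x n = gone G -> x = gone G.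

Definition arc {G : Group} (x y : G) : Prop :=
  x <> y /\ exists n : Z, n <> 0%Z /\ y = zpow x n.

Definition edge {G : Group} (x y : G) : Prop := arc x y \/ arc y x.

Definition Oset {G : Group} (z : G) (y : G) : Prop :=
  y <> ginv G z /\ arc z y.

Definition power_graph_iso {G H : Group} (phi : G -> H) : Prop :=
  (exists psi : H -> G, (forall a, psi (phi a) = a) /\ (forall b, phi (psi b) = b)) /\
  (forall a b : G, edge a b <-> edge (phi a) (phi b)).

(* Main.v *)
Require Import Defs.
From Stdlib Require Import ZArith Lia List Classical FinFun.

Lemma mulrV {G : Group} (a : G) : gmul G a (ginv G a) = gone G.
Proof.
  set (b := ginv G a).
  transitivity (gmul G (gmul G (ginv G b) b) (gmul G a b)).
  { rewrite gmulV, gmul1. reflexivity. }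
  rewrite <- gmulA, (gmulA _ b a b).
  unfold b at 2 3. rewrite gmulV, gmul1. apply gmulV.
Qed.

Lemma mulr1 {G : Group} (a : G) : gmul G a (gone G) = a.
Proof. rewrite <- (gmulV G a), gmulA, mulrV, gmul1. reflexivity. Qed.

Lemma mul_cancel_l {G : Group} (c a b : G) : gmul G c a = gmul G c b -> a = b.
Proof.
  intro E. rewrite <- (gmul1 G a), <- (gmul1 G b), <- (gmulV G c), <- !gmulA, E.
  reflexivity.
Qed.

Lemma inv_uniq {G : Group} (a b : G) : gmul G a b = gone G -> a = ginv G b.
Proof.
  intro E. rewrite <- (mulr1 a), <- (mulrV b), gmulA, E, gmul1. reflexivity.
Qed.

Lemma invK {G : Group} (a : G) : ginv G (ginv G a) = a.
Proof. symmetry. apply inv_uniq. apply mulrV. Qed.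

Lemma inv1 {G : Group} : ginv G (gone G) = gone G.
Proof. symmetry. apply inv_uniq. apply gmul1. Qed.

Lemma invM {G : Group} (a b : G) : ginv G (gmul G a b) = gmul G (ginv G b) (ginv G a).
Proof.
  symmetry. apply inv_uniq.
  rewrite <- gmulA, (gmulA _ (ginv G a)), gmulV, gmul1, gmulV. reflexivity.
Qed.

Lemma npow_add {G : Group} (x : G) m n : npow x (m + n) = gmul G (npow x m) (npow x n).
Proof.
  induction m; simpl. rewrite gmul1; reflexivity.
  rewrite IHm, gmulA. reflexivity.
Qed.

Lemma npow_Sr {G : Group} (x : G) m : npow x (S m) = gmul G (npow x m) x.
Proof.
  replace (S m) with (m + 1)%nat by lia. rewrite npow_add. simpl. rewrite mulr1. reflexivity.
Qed.

Lemma zpow_nat {G : Group} (x : G) k : zpow x (Z.of_nat k) = npow x k.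
Proof.
  destruct k. reflexivity. simpl. rewrite SuccNat2Pos.id_succ. reflexivity.
Qed.

Lemma zpow_negnat {G : Group} (x : G) k : zpow x (- Z.of_nat k) = ginv G (npow x k).
Proof.
  destruct k. simpl. rewrite inv1. reflexivity.
  simpl. rewrite SuccNat2Pos.id_succ. reflexivity.
Qed.

Lemma zpow_succ {G : Group} (x : G) n : zpow x (n + 1) = gmul G x (zpow x n).
Proof.
  destruct n as [|p|p].
  - simpl. reflexivity.
  - replace (Z.pos p + 1)%Z with (Z.pos (Pos.succ p)) by lia. simpl.
    rewrite Pos2Nat.inj_succ. reflexivity.
  - destruct (Pos.succ_pred_or p) as [E|E].
    + subst p. simpl. rewrite mulr1, mulrV. reflexivity.
    + rewrite <- E. replace (Z.neg (Pos.succ (Pos.pred p)) + 1)%Z with (Z.neg (Pos.pred p)) by lia.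
      simpl. rewrite Pos2Nat.inj_succ, npow_Sr, invM, gmulA, mulrV, gmul1. reflexivity.
Qed.

Lemma zpow_pred {G : Group} (x : G) n : zpow x (n - 1) = gmul G (ginv G x) (zpow x n).
Proof.
  replace n with (n - 1 + 1)%Z at 2 by lia. rewrite zpow_succ, gmulA, gmulV, gmul1. reflexivity.
Qed.

Lemma zpow0 {G : Group} (x : G) : zpow x 0 = gone G.
Proof. reflexivity. Qed.

Lemma zpow1 {G : Group} (x : G) : zpow x 1 = x.
Proof. simpl. apply mulr1. Qed.

Lemma zpowN1 {G : Group} (x : G) : zpow x (-1) = ginv G x.
Proof. simpl. rewrite mulr1. reflexivity. Qed.

Lemma zpow_add {G : Group} (x : G) a b : zpow x (a + b) = gmul G (zpow x a) (zpow x b).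
Proof.
  induction a using Z.peano_ind.
  - simpl. rewrite gmul1. reflexivity.
  - rewrite <- Z.add_1_r. replace (a + 1 + b)%Z with (a + b + 1)%Z by lia.
    rewrite !zpow_succ, IHa, gmulA. reflexivity.
  - rewrite <- Z.sub_1_r. replace (a - 1 + b)%Z with (a + b - 1)%Z by lia.
    rewrite !zpow_pred, IHa, gmulA. reflexivity.
Qed.

Lemma zpow_opp {G : Group} (x : G) a : zpow x (- a) = ginv G (zpow x a).
Proof. apply inv_uniq. rewrite <- zpow_add. replace (- a + a)%Z with 0%Z by lia. reflexivity. Qed.

Lemma zpow_mul {G : Group} (x : G) a b : zpow (zpow x a) b = zpow x (a * b).
Proof.
  induction b using Z.peano_ind.
  - rewrite Z.mul_0_r. reflexivity.
  - rewrite <- Z.add_1_r, zpow_succ, IHb, <- zpow_add. f_equal. lia.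
  - rewrite <- Z.sub_1_r, zpow_pred, IHb, <- zpow_opp, <- zpow_add. f_equal. lia.
Qed.

Lemma zpow_one {G : Group} n : zpow (gone G) n = gone G.
Proof.
  rewrite <- (zpow0 (gone G)) at 1. rewrite zpow_mul. reflexivity.
Qed.

Lemma tf_zpow {G : Group} (HG : torsion_free G) (x : G) n :
  n <> 0%Z -> zpow x n = gone G -> x = gone G.
Proof.
  intros Hn E. destruct n as [|p|p]; [lia| |].
  - apply (HG x (Pos.to_nat p)). apply Pos2Nat.is_pos. exact E.
  - apply (HG x (Pos.to_nat p)). apply Pos2Nat.is_pos. simpl in E.
    rewrite <- (invK (npow x _)), E, inv1. reflexivity.
Qed.

Lemma zpow_inj {G : Group} (HG : torsion_free G) (x : G) a b :
  x <> gone G -> zpow x a = zpow x b -> a = b.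
Proof.
  intros Hx E. destruct (Z.eq_dec a b) as [|Hne]; [assumption|].
  exfalso. apply Hx. apply (tf_zpow HG x (a - b)). lia.
  unfold Z.sub. rewrite zpow_add, E, <- zpow_add. replace (b + - b)%Z with 0%Z by lia. reflexivity.
Qed.

Open Scope Z_scope.
Lemma sz c n a : a = c*n -> a <> 0 -> Z.abs c <= Z.abs a.
Proof. intros E Ha. subst a. rewrite Z.abs_mul. assert (n <> 0) by (intro; subst; lia).
  pose proof (Z.abs_nonneg c). assert (1 <= Z.abs n) by lia. nia. Qed.
Lemma one a m : a * m = 1 -> a = 1 \/ a = -1.
Proof. apply Z.eq_mul_1. Qed.
Lemma A1 a n : a <> 0 -> a <> 1 -> a <> -1 -> 2*a+1 <> a*n.
Proof. intros ? ? ? E. destruct (one a (n-2)); [lia|lia|lia]. Qed.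
Lemma A2 a n : a <> 0 -> a <> 1 -> a <> -1 -> a <> (2*a+1)*n.
Proof. intros ? ? ? E. pose proof (sz _ _ _ E). lia. Qed.
Lemma A3 a b n : a <> 0 -> a <> 1 -> a <> -1 -> a*a*b*b+1 <> a*n.
Proof. intros ? ? ? E. destruct (one a (n - a*b*b)); [lia|lia|lia]. Qed.
Lemma A4 a b n : a <> 0 -> b <> 0 -> a <> (a*a*b*b+1)*n.
Proof. intros ? ? E. pose proof (sz _ _ _ E). assert (0 < a*a) by nia. assert (0<b*b) by nia.
  assert (Z.abs a <= a*a) by nia. assert (1 <= b*b) by lia. nia. Qed.
Lemma B3 a n K s : a <> 0 -> n <> 0 -> n <> 1 -> n <> -1 -> 2 <= K -> a*(n*K+1) <> (a*n)*s.
Proof. intros ? ? ? ? ? E. assert (n*K+1 = n*s) by nia. destruct (one n (s-K)); lia. Qed.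
Lemma B4 a n K s : a <> 0 -> n <> 0 -> n <> 1 -> n <> -1 -> 2 <= K -> a*n <> a*(n*K+1)*s.
Proof. intros ? ? ? ? ? E. assert (n = (n*K+1)*s) by nia. pose proof (sz _ _ _ H4). 
  assert (2 <= Z.abs n) by lia. assert (Z.abs (n*K+1) >= Z.abs n * K - 1). 
  { rewrite <- (Z.abs_eq K) by lia. rewrite <- Z.abs_mul. lia. } nia. Qed.

Lemma edge_sym {G : Group} (a b : G) : edge a b -> edge b a.
Proof. unfold edge; tauto. Qed.

Lemma arc_pow {G : Group} (HG : torsion_free G) (z : G) a b :
  z <> gone G -> arc (zpow z a) (zpow z b) -> exists n, n <> 0 /\ b = a * n.
Proof.
  intros Hz [_ [n [Hn E]]]. exists n. split; auto.
  rewrite zpow_mul in E. exact (zpow_inj HG z _ _ Hz E).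
Qed.

Lemma non_edge_pow {G : Group} (HG : torsion_free G) (z : G) a b :
  z <> gone G -> (forall n, b <> a * n) -> (forall n, a <> b * n) ->
  ~ edge (zpow z a) (zpow z b).
Proof.
  intros Hz H1 H2 [E|E]; apply arc_pow in E; auto; destruct E as [n [_ E]].
  - exact (H1 n E).
  - exact (H2 n E).
Qed.

Lemma arc_pow_intro {G : Group} (HG : torsion_free G) (z : G) a b n :
  z <> gone G -> a <> b -> n <> 0 -> b = a * n -> arc (zpow z a) (zpow z b).
Proof.
  intros Hz Hab Hn E. split.
  - intro E'. apply Hab. exact (zpow_inj HG z _ _ Hz E').
  - exists n. split; auto. rewrite zpow_mul, E. reflexivity.
Qed.

Lemma oset_inv {G : Group} (z u : G) : Oset z u ->
  z <> gone G /\ exists a, u = zpow z a /\ a <> 0 /\ a <> 1 /\ a <> -1.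
Proof.
  intros [Hi [Hzu [a [Ha E]]]].
  assert (Hz : z <> gone G).
  { intro Z1. apply Hzu. rewrite E, Z1, zpow_one. reflexivity. }
  split; auto. exists a. repeat split; auto.
  - intro; subst. apply Hzu. rewrite zpow1. reflexivity.
  - intro; subst. apply Hi. rewrite zpowN1. reflexivity.
Qed.

Lemma oset_intro {G : Group} (HG : torsion_free G) (z : G) a :
  z <> gone G -> a <> 0 -> a <> 1 -> a <> -1 -> Oset z (zpow z a).
Proof.
  intros Hz H0 H1 H2. split.
  - rewrite <- zpowN1. intro E. apply H2. exact (zpow_inj HG z _ _ Hz E).
  - split.
    + rewrite <- (zpow1 z) at 1. intro E. apply H1. symmetry. exact (zpow_inj HG z _ _ Hz E).
    + exists a. auto.
Qed.

Lemma isolated1 {G : Group} (HG : torsion_free G) (b : G) : ~ edge (gone G) b.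
Proof.
  intros [[Hne [n [Hn E]]]|[Hne [n [Hn E]]]].
  - apply Hne. rewrite E, zpow_one. reflexivity.
  - apply Hne. exact (tf_zpow HG b n Hn (eq_sym E)).
Qed.

Lemma iso_inv {G H : Group} (phi : G -> H) : power_graph_iso phi ->
  exists psi : H -> G, power_graph_iso psi /\ (forall a, psi (phi a) = a) /\ (forall b, phi (psi b) = b).
Proof.
  intros [[psi [K1 K2]] He]. exists psi. split; [|auto]. split.
  - exists phi. auto.
  - intros a b. rewrite He, !K2. tauto.
Qed.

Lemma iso_inj {G H : Group} (phi : G -> H) : power_graph_iso phi -> forall a b, phi a = phi b -> a = b.
Proof.
  intros [[psi [K1 K2]] _] a b E. rewrite <- (K1 a), <- (K1 b), E. reflexivity.
Qed.

Lemma tf_transfer {G H : Group} (phi : G -> H) (HG : torsion_free G) :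
  power_graph_iso phi -> torsion_free H.
Proof.
  intros Hphi. destruct Hphi as [[psi [K1 K2]] He].
  assert (E1 : phi (gone G) = gone H).
  { apply NNPP. intro Hh. set (h := phi (gone G)) in *.
    assert (A : arc h (zpow h 2)).
    { split.
      - replace 2 with (1 + 1) by reflexivity. rewrite zpow_add, zpow1. intro E.
        apply Hh. apply (mul_cancel_l h). rewrite mulr1. symmetry. exact E.
      - exists 2. split; [lia|reflexivity]. }
    apply (isolated1 HG (psi (zpow h 2))). apply He. rewrite K2. left. exact A. }
  intros h n Hn E. apply NNPP. intro Hh.
  apply (isolated1 HG (psi h)). apply edge_sym. apply He. rewrite K2, E1. left. split; auto.
  exists (Z.of_nat n). split; [lia|]. rewrite zpow_nat. auto.
Qed.

Lemma twin {H : Group} (w v : H) : edge w v -> v <> ginv H w -> edge (ginv H w) v.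
Proof.
  intros [[Hne [n [Hn E]]]|[Hne [n [Hn E]]]] Hv.
  - left. split; [auto|]. exists (- n). split; [lia|].
    rewrite <- zpowN1, zpow_mul, E. f_equal. lia.
  - right. split; [auto|]. exists (- n). split; [lia|].
    rewrite zpow_opp, E. reflexivity.
Qed.

Lemma not_inv {G H : Group} (HG : torsion_free G) (phi : G -> H) (Hphi : power_graph_iso phi)
  (z : G) a : z <> gone G -> a <> 0 -> a <> 1 -> a <> -1 ->
  phi (zpow z a) <> ginv H (phi z).
Proof.
  intros Hz H0 H1 H2 E.
  assert (Es : edge z (zpow z (2*a+1))).
  { left. rewrite <- (zpow1 z) at 1. apply (arc_pow_intro HG z 1 (2*a+1) (2*a+1)); auto; lia. }
  apply (proj2 Hphi) in Es.
  apply twin in Es.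
  - rewrite <- E in Es. apply (proj2 Hphi) in Es.
    revert Es. apply non_edge_pow; auto.
    + intros n. apply A1; auto.
    + intros n. apply A2; auto.
  - rewrite <- E. intro E'. apply (iso_inj phi Hphi) in E'.
    apply (zpow_inj HG z _ _ Hz) in E'. lia.
Qed.

Lemma dich {G H : Group} (HG : torsion_free G) (phi : G -> H) (Hphi : power_graph_iso phi)
  (z u : G) : Oset z u -> Oset (phi z) (phi u) \/ arc (phi u) (phi z).
Proof.
  intros Hu. assert (Ed : edge z u) by (left; exact (proj2 Hu)).
  apply (proj2 Hphi) in Ed. destruct Ed as [A|A]; [left|right; exact A].
  split; [|exact A].
  destruct (oset_inv z u Hu) as [Hz [a [Ea [H0 [H1 H2]]]]]. subst u.
  apply not_inv; auto.
Qed.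

Lemma oset_arc_edge {H : Group} (HH : torsion_free H) (w p q : H) :
  Oset w p -> arc q w -> edge p q.
Proof.
  intros Hp [Hqw [m [Hm Ew]]].
  destruct (oset_inv w p Hp) as [Hw [e [Ep [H0 [H1 H2]]]]].
  right. split.
  - intro Eq. subst q. rewrite Ep, zpow_mul in Ew. rewrite <- (zpow1 w) in Ew at 1.
    apply (zpow_inj HH w _ _ Hw) in Ew. symmetry in Ew. apply Z.eq_mul_1 in Ew. lia.
  - exists (m * e). split; [lia|]. rewrite Ep, Ew, zpow_mul. reflexivity.
Qed.

Lemma oset_not_arc {H : Group} (HH : torsion_free H) (w p : H) :
  Oset w p -> ~ arc p w.
Proof.
  intros Hp A. destruct (oset_arc_edge HH w p p Hp A) as [[N _]|[N _]]; auto.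
Qed.

Lemma const {G H : Group} (HG : torsion_free G) (phi : G -> H) (Hphi : power_graph_iso phi)
  (z u u' : G) : Oset z u -> Oset z u' -> Oset (phi z) (phi u) -> Oset (phi z) (phi u').
Proof.
  intros Hu Hu' Pu.
  pose proof (tf_transfer phi HG Hphi) as HH.
  destruct (oset_inv z u Hu) as [Hz [a [Ea [Ha0 [Ha1 Ha2]]]]].
  destruct (oset_inv z u' Hu') as [_ [b [Eb [Hb0 [Hb1 Hb2]]]]].
  set (c := a*a*b*b+1).
  assert (Hc : Oset z (zpow z c)).
  { apply oset_intro; auto; unfold c; nia. }
  assert (N1 : ~ edge u (zpow z c)).
  { subst u. apply non_edge_pow; auto; intro n; unfold c.
    - apply A3; auto.
    - apply A4; auto. }
  assert (N2 : ~ edge (zpow z c) u').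
  { subst u'. apply non_edge_pow; auto; intro n; unfold c.
    - replace (a*a*b*b+1) with (b*b*a*a+1) by ring. apply A4; auto.
    - replace (a*a*b*b+1) with (b*b*a*a+1) by ring. apply A3; auto. }
  assert (Pc : Oset (phi z) (phi (zpow z c))).
  { destruct (dich HG phi Hphi z _ Hc) as [P|A]; [exact P|].
    exfalso. apply N1. apply (proj2 Hphi). exact (oset_arc_edge HH _ _ _ Pu A). }
  destruct (dich HG phi Hphi z _ Hu') as [P|A]; [exact P|].
  exfalso. apply N2. apply (proj2 Hphi). exact (oset_arc_edge HH _ _ _ Pc A).
Qed.

Lemma fin_contra {H : Group} (g : nat -> H) (r : H) (B : Z) :
  (forall i j, g i = g j -> i = j) ->
  (forall k, exists e, Z.abs e <= B /\ g k = zpow r e) -> False.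
Proof.
  intros Hinj Hb.
  assert (HB : 0 <= B) by (destruct (Hb O) as [e [He _]]; lia).
  set (N := Z.to_nat (2*B+1)).
  assert (ND : NoDup (map g (seq 0 (S N)))).
  { apply FinFun.Injective_map_NoDup; [exact Hinj|apply seq_NoDup]. }
  assert (IN : incl (map g (seq 0 (S N))) (map (fun i => zpow r (Z.of_nat i - B)) (seq 0 N))).
  { intros h Hh. apply in_map_iff in Hh. destruct Hh as [k [Ek _]]. subst h.
    destruct (Hb k) as [e [He Ee]]. apply in_map_iff. exists (Z.to_nat (e + B)). split.
    - rewrite Ee. f_equal. lia.
    - apply in_seq. unfold N. lia. }
  pose proof (NoDup_incl_length ND IN) as L.
  rewrite !length_map, !length_seq in L. lia.
Qed.

Lemma C1 a n K : a <> 0 -> a <> 1 -> a <> -1 -> n <> 0 -> n <> 1 -> n <> -1 -> 2 <= K ->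
  a*(n*K+1) <> 0 /\ a*(n*K+1) <> 1 /\ a*(n*K+1) <> -1 /\ a <> a*(n*K+1) /\ a*(n*K+1) <> a*n.
Proof.
  intros Ha0 Ha1 Ha2 Hn0 Hn1 Hn2 HK. assert (F1 : n*K+1 <> 0).
  { intro E. assert (F : n * (-K) = 1) by lia. apply Z.eq_mul_1 in F. lia. }
  assert (F2 : n*K+1 <> 1) by nia.
  assert (F3 : n*K+1 <> n). { intro E. assert (F : n * (1-K) = 1) by lia. apply Z.eq_mul_1 in F. lia. }
  repeat split.
  - nia.
  - intro E. apply Z.eq_mul_1 in E. lia.
  - intro E. assert (F : a * (-(n*K+1)) = 1) by lia. apply Z.eq_mul_1 in F. lia.
  - intro E. apply F2. apply (Z.mul_reg_l _ _ a); auto. lia.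
  - intro E. apply F3. apply (Z.mul_reg_l _ _ a); auto.
Qed.

Theorem mainTheorem8 (G : Group) (x y z : G)
  (HG : torsion_free G)
  (Hx : Oset z x) (Hy : Oset z y)
  (Hxy : arc x y) (Hy1 : y <> x) (Hy2 : y <> ginv G x)
  (H : Group) (phi : G -> H) (Hphi : power_graph_iso phi) :
  arc (phi x) (phi y) <->
  (forall w : H, Oset (phi z) w <-> exists u : G, Oset z u /\ w = phi u).
Proof.
  pose proof (tf_transfer phi HG Hphi) as HH.
  destruct (iso_inv phi Hphi) as [psi [Hpsi [K1 K2]]].
  destruct (oset_inv z x Hx) as [Hz [a [Ea [Ha0 [Ha1 Ha2]]]]].
  destruct (oset_inv z y Hy) as [_ [b [Eb [Hb0 [Hb1 Hb2]]]]].
  assert (Exy : edge x y) by (left; exact Hxy).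
  destruct Hxy as [_ [n [Hn En]]].
  assert (Ebn : b = a * n).
  { rewrite Ea, Eb, zpow_mul in En. exact (zpow_inj HG z _ _ Hz En). }
  assert (Hn1 : n <> 1). { intro E1. rewrite E1 in En. apply Hy1. rewrite En, zpow1. reflexivity. }
  assert (Hn2 : n <> -1). { intro E1. rewrite E1 in En. apply Hy2. rewrite En, zpowN1. reflexivity. }
  set (u := fun k : nat => zpow z (a * (n * (Z.of_nat k + 2) + 1))).
  set (g := fun k => phi (u k)).
  assert (Cf : forall k : nat, let e := a * (n * (Z.of_nat k + 2) + 1) in
     e <> 0 /\ e <> 1 /\ e <> -1 /\ a <> e /\ e <> a*n).
  { intros k. apply C1; auto; lia. }
  assert (Uo : forall k, Oset z (u k)).
  { intro k. destruct (Cf k) as [C0 [C1' [C2 _]]]. apply oset_intro; auto. }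
  assert (Ux : forall k, edge (u k) x).
  { intro k. destruct (Cf k) as [_ [_ [_ [C3 _]]]]. right. rewrite Ea.
    apply (arc_pow_intro HG z _ _ (n * (Z.of_nat k + 2) + 1)); auto.
    - intro E. assert (E' : a * (n * (Z.of_nat k + 2) + 1) = a * 0) by lia.
      apply Z.mul_reg_l in E'; auto. apply C3. subst. lia.
    }
  assert (Uy : forall k, ~ edge (u k) y).
  { intro k. unfold u. rewrite Eb, Ebn. apply non_edge_pow; auto; intro s.
    - apply B4; auto; lia.
    - apply B3; auto; lia. }
  assert (Uny : forall k, g k <> phi y).
  { intros k E. apply (iso_inj phi Hphi) in E. unfold u in E. rewrite Eb, Ebn in E.
    apply (zpow_inj HG z _ _ Hz) in E. destruct (Cf k) as [_ [_ [_ [_ C4]]]]. auto. }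
  assert (Ginj : forall i j, g i = g j -> i = j).
  { intros i j E. apply (iso_inj phi Hphi) in E. apply (zpow_inj HG z _ _ Hz) in E.
    assert (E2 : (a * n) * (Z.of_nat i - Z.of_nat j) = 0) by lia.
    apply Z.mul_eq_0 in E2. destruct E2 as [E2|E2]; [|lia].
    apply Z.mul_eq_0 in E2. lia. }
  assert (Gx : forall k, edge (g k) (phi x)) by (intro k; apply (proj2 Hphi); apply Ux).
  assert (Gy : forall k, ~ edge (g k) (phi y)) by (intros k E; apply (Uy k); apply (proj2 Hphi); exact E).
  split.
  - intros Harc.
    assert (Px : Oset (phi z) (phi x)).
    { destruct (dich HG phi Hphi z x Hx) as [P|Ax]; [exact P|exfalso].
      assert (Ngen : forall v, Oset z v -> ~ Oset (phi z) (phi v)).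
      { intros v Hv Pv. apply (oset_not_arc HH _ _ (const HG phi Hphi z v x Hv Hx Pv) Ax). }
      destruct Harc as [Hxy' [j [Hj Ej]]].
      destruct Ax as [Hxw [m [Hm Em]]].
      assert (Hx1 : phi x <> gone H).
      { intro E1. apply Hxw. rewrite Em, E1, zpow_one. reflexivity. }
      apply (fin_contra g (phi x) (Z.abs m) Ginj). intro k.
      destruct (dich HG phi Hphi z (u k) (Uo k)) as [P|Ak]; [exfalso; exact (Ngen _ (Uo k) P)|].
      destruct Ak as [_ [t [Ht Et]]].
      destruct (Gx k) as [[Hne [i [Hi Ei]]]|[Hne [i [Hi Ei]]]].
      + exfalso. apply (Gy k). left. split; [apply Uny|]. exists (i * j). split; [lia|].
        rewrite Ej, Ei, zpow_mul. reflexivity.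
      + exists i. split; [|exact Ei].
        fold (g k) in Et. rewrite Ei, zpow_mul, Em in Et.
        apply (zpow_inj HH _ _ _ Hx1) in Et. apply (sz _ _ _ Et Hm). }
    assert (Pall : forall v, Oset z v -> Oset (phi z) (phi v)).
    { intros v Hv. exact (const HG phi Hphi z x v Hx Hv Px). }
    intros w. split.
    + intros Pw. exists (psi w). split; [|symmetry; apply K2].
      pose proof (const HH psi Hpsi (phi z) (phi x) w Px Pw) as P.
      rewrite !K1 in P. apply P. exact Hx.
    + intros [v [Hv Ev]]. subst w. apply Pall; auto.
  - intros R.
    assert (Px : Oset (phi z) (phi x)) by (apply R; exists x; auto).
    assert (Py : Oset (phi z) (phi y)) by (apply R; exists y; auto).
    apply (proj2 Hphi) in Exy. destruct Exy as [A|A]; [exact A|exfalso].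
    destruct A as [Hyx [t [Ht Et]]].
    destruct (oset_inv _ _ Py) as [Hw [d [Ed _]]].
    apply (fin_contra g (phi z) (Z.abs (d * t)) Ginj). intro k.
    assert (Pk : Oset (phi z) (g k)) by (apply R; exists (u k); auto).
    destruct (oset_inv _ _ Pk) as [_ [e [Ee _]]].
    destruct (Gx k) as [[Hne [s [Hs Es]]]|[Hne [s [Hs Es]]]].
    + exists e. split; [|exact Ee].
      rewrite Et, Ed, Ee, !zpow_mul in Es. apply (zpow_inj HH _ _ _ Hw) in Es.
      destruct (Z.eq_dec (d*t) 0) as [D|D]. { rewrite D in Es. symmetry in Es. apply Z.mul_eq_0 in Es. lia. }
      apply (sz _ _ _ Es D).
    + exfalso. apply (Gy k). right. split; [intro E; apply (Uny k); auto|].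
      exists (t * s). split; [lia|]. rewrite Es, Et, zpow_mul. reflexivity.
Qed.
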